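(* Let $V=(J,(V_j)_{j\in J},d,H)$ be a hypergraph system, let $(\nu_e)_{e\in H}$ be a pseudorandom system of measures on $V$, and let $e\in H$. Let $K$ be a finite set and for each $k\in K$ let $f_k:V_e\to\mathbb{R}$ satisfy $|f_k(x_e)|\le\nu_e(x_e)+1$ for all $x_e\in V_e$. Then $$\Big|\mathbb{E}\Big((\nu_e(x_e)-1)\prod_{k\in K}\mathcal{D}_ef_k(x_e)\ \Big|\ x_e\in V_e\Big)\Big|=o_{N\to\infty;K}(1),$$ where the $o$-term depends only on $|K|$ (and $J$ and the pseudorandomness constants), not on the functions $f_k$.
   Context: A hypergraph system is a quadruple $V=(J,(V_j)_{j\in J},d,H)$ where $J$ is a finite set, each $V_j$ is a finite nonempty set, $d\ge1$ is an integer and $H\subseteq\binom{J}{d}:=\{e\subseteq J:|e|=d\}$; for $e\subseteq J$ put $V_e:=\prod_{j\in e}V_j$. For a finite nonempty set $Z$ and $f:Z\to\mathbb{R}$, $\mathbb{E}(f(x)\mid x\in Z):=|Z|^{-1}\sum_{x\in Z}f(x)$; constraints written after the bar mean uniform averaging over all tuples satisfying them. All objects depend on a parameter $N$ ranging over a sequence tending to infinity while $J,d,H$ are fixed; implicit constants may depend on $J$. $o_{x\to0;y}(X)$ denotes a quantity bounded in magnitude by $c(x,y)X$ where $c(x,y)\to0$ as $x\to0$ for each fixed $y$; $O_y(X)$ a quantity bounded by $C(y)X$. Cube notation: for a finite set $e$, $\{0,1\}^e$ is the set of tuples $\omega=(\omega_j)_{j\in e}$ with $\omega_j\in\{0,1\}$,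 and $0^e$ is the all-zero tuple; for $x^{(0)}_J,x^{(1)}_J\in V_J$, $e\subseteq J$ and $\omega\in\{0,1\}^e$, set $x^{(\omega)}_e:=(x^{(\omega_j)}_j)_{j\in e}\in V_e$ and $x^{(a)}_e:=(x^{(a)}_j)_{j\in e}$ for $a\in\{0,1\}$. A system of measures is a family of functions $\nu_e:V_e\to[0,\infty)$, $e\in H$, with $\mathbb{E}(\nu_e(x_e)\mid x_e\in V_e)=1+o_{N\to\infty}(1)$. For $e\in H$ and $f:V_e\to\mathbb{R}$, the dual function is $\mathcal{D}_ef(x^{(0)}_e):=\mathbb{E}\big(\prod_{\omega\in\{0,1\}^e,\ \omega\neq 0^e}f(x^{(\omega)}_e)\mid x^{(1)}_e\in V_e\big)$. The system is pseudorandom if: (i) $\mathcal{D}_e(\nu_e+1)(x_e)=O(1)$ for all $e\in H$, $x_e\in V_e$; (ii) for every choice of exponents $n_{e,\omega}\in\{0,1\}$, $\mathbb{E}\big(\prod_{e\in H}\prod_{\omega\in\{0,1\}^e}\nu_e(x^{(\omega)}_e)^{n_{e,\omega}}\mid x^{(0)}_J,x^{(1)}_J\in V_J\big)=1+o_{N\to\infty}(1)$; (iii) for every $e\in H$, $j\in e$, every choice of $n_{e,\omega}\in\{0,1\}$ and every integer $K\ge0$, $\mathbb{E}\Big(\mathbb{E}\big(\prod_{\omega\in\{0,1\}^e}\nu_e(x^{(\omega)}_e)^{n_{e,\omega}}\mid x^{(0)}_j,x^{(1)}_j\in V_j\big)^K\ \Big|\ x^{(0)}_{e\setminus\{j\}},x^{(1)}_{e\setminus\{j\}}\in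 V_{e\setminus\{j\}}\Big)=O_K(1)$. *)

(* Defs.v *)
From HB Require Import structures.
From mathcomp Require Import all_boot all_order all_algebra.
From mathcomp Require Import reals.
Set Implicit Arguments. Unset Strict Implicit. Unset Printing Implicit Defensive.
Import Order.TTheory GRing.Theory Num.Theory.
Local Open Scope ring_scope.

Section Defs.
Variable R : realType.
Variable J : finType.
(* V N j : the finite vertex set V_j at parameter value N *)
Variable V : nat -> J -> finType.

Definition avg (T : finType) (f : T -> R) : R :=
  (#|T|%:R)^-1 * \sum_(x : T) f x.

Definition Ve (N : nat) (e : {set J}) : finType :=
  {dffun forall i : {j : J | j \in e}, V N (val i)}.

Definition VJ (N : nat) : finType := {dffun forall j : J, V N j}.

Definition cube (e : {set J}) : finType := {ffun {j : J | j \in e} -> bool}.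
Definition cube0 (e : {set J}) : cube e := [ffun => false].

Definition cubept N (e : {set J}) (x0 x1 : Ve N e) (w : cube e) : Ve N e :=
  @finfun _ (fun i : {j : J | j \in e} => V N (val i))
    (fun i => if w i then x1 i else x0 i).

Definition restr N (e : {set J}) (x : VJ N) : Ve N e :=
  @finfun _ (fun i : {j : J | j \in e} => V N (val i)) (fun i => x (val i)).

Lemma in_setD1_of (e : {set J}) (j i : J) : i \in e -> i <> j -> i \in e :\ j.
Proof. by move=> ie /eqP ij; rewrite in_setD1 ij ie. Qed.

Definition glue N (e : {set J}) (j : J) (y : Ve N (e :\ j)) (a : V N j) : Ve N e :=
  @finfun _ (fun i : {k : J | k \in e} => V N (val i))
    (fun i => match val i =P j with
              | ReflectT h => eq_rect j (fun k => V N k) a (val i) (esym h)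
              | ReflectF hn => y (exist _ (val i) (in_setD1_of (valP i) hn))
              end).

Definition dual N (e : {set J}) (f : Ve N e -> R) (x0 : Ve N e) : R :=
  avg (fun x1 : Ve N e => \prod_(w : cube e | w != cube0 e) f (cubept x0 x1 w)).

Definition hypergraph_system (d : nat) (H : {set {set J}}) : Prop :=
  (1 <= d)%N /\ (forall N j, (0 < #|V N j|)%N) /\ (forall e, e \in H -> #|e| = d).

Definition measure_system (H : {set {set J}}) (nu : forall N e, Ve N e -> R) : Prop :=
  (forall N e (x : Ve N e), e \in H -> 0 <= nu N e x) /\
  (forall e, e \in H -> forall eps : R, 0 < eps -> exists N0, forall N, (N0 <= N)%N ->
      `|avg (nu N e) - 1| <= eps).

Definition pseudorandom (H : {set {set J}}) (nu : forall N e, Ve N e -> R) : Prop :=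
  (exists C : R, exists N0, forall N, (N0 <= N)%N -> forall e, e \in H ->
     forall x : Ve N e, `|dual (fun y => nu N e y + 1) x| <= C) /\
  (forall n : forall e : {set J}, cube e -> bool,
     forall eps : R, 0 < eps -> exists N0, forall N, (N0 <= N)%N ->
     `|avg (fun p : VJ N * VJ N =>
          \prod_(e in H) \prod_(w : cube e)
             nu N e (cubept (restr e p.1) (restr e p.2) w) ^+ n e w) - 1| <= eps) /\
  (forall e, e \in H -> forall j, j \in e -> forall n : cube e -> bool, forall K : nat,
     exists C : R, exists N0, forall N, (N0 <= N)%N ->
     `|avg (fun y : Ve N (e :\ j) * Ve N (e :\ j) =>
          (avg (fun a : V N j * V N j =>
             \prod_(w : cube e)
               nu N e (cubept (glue y.1 a.1) (glue y.2 a.2) w) ^+ n w)) ^+ K)| <= C).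

End Defs.

(* Main.v *)
Require Import Defs.
From HB Require Import structures.
From mathcomp Require Import all_boot all_order all_algebra.
From mathcomp Require Import reals.
From mathcomp Require Import ring lra zify.
Import Order.TTheory GRing.Theory Num.Theory.
Local Open Scope ring_scope.

Set Implicit Arguments. Unset Strict Implicit. Unset Printing Implicit Defensive.

Section AvgLemmas.
Variable R : realType.

Lemma avgE (T : finType) (f : T -> R) : avg f = (#|T|%:R)^-1 * \sum_x f x.
Proof. by []. Qed.

Lemma eq_avg (T : finType) (f g : T -> R) : f =1 g -> avg f = avg g.
Proof. by move=> fg; rewrite /avg; congr (_ * _); apply: eq_bigr. Qed.

Lemma avg_ge0 (T : finType) (f : T -> R) : (forall x, 0 <= f x) -> 0 <= avg f.
Proof. by move=> h; rewrite /avg mulr_ge0 ?invr_ge0 ?ler0n ?sumr_ge0. Qed.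

Lemma avg_le (T : finType) (f g : T -> R) : (forall x, f x <= g x) -> avg f <= avg g.
Proof. by move=> h; rewrite /avg ler_wpM2l ?invr_ge0 ?ler0n ?ler_sum. Qed.

Lemma norm_avg (T : finType) (f : T -> R) : `|avg f| <= avg (fun x => `|f x|).
Proof.
rewrite /avg normrM ger0_norm ?invr_ge0 ?ler0n //.
by rewrite ler_wpM2l ?invr_ge0 ?ler0n ?ler_norm_sum.
Qed.

Lemma avgD (T : finType) (f g : T -> R) : avg (fun x => f x + g x) = avg f + avg g.
Proof. by rewrite /avg big_split mulrDr. Qed.

Lemma avgZ (T : finType) (c : R) (f : T -> R) : avg (fun x => c * f x) = c * avg f.
Proof. by rewrite /avg -mulr_sumr mulrCA. Qed.

Lemma avgZr (T : finType) (c : R) (f : T -> R) : avg (fun x => f x * c) = avg f * c.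
Proof. by rewrite (eq_avg (g := fun x => c * f x)) ?avgZ 1?mulrC // => x; rewrite mulrC. Qed.

Lemma avgN (T : finType) (f : T -> R) : avg (fun x => - f x) = - avg f.
Proof. by rewrite /avg sumrN mulrN. Qed.

Lemma avgB (T : finType) (f g : T -> R) : avg (fun x => f x - g x) = avg f - avg g.
Proof. by rewrite avgD avgN. Qed.

Lemma avg_sum (T I : finType) (F : I -> T -> R) :
  avg (fun x => \sum_i F i x) = \sum_i avg (F i).
Proof. by rewrite /avg exchange_big mulr_sumr. Qed.

Lemma avg_cst (T : finType) (c : R) : (0 < #|T|)%N -> avg (fun _ : T => c) = c.
Proof.
move=> h; rewrite /avg sumr_const -[c *+ _]mulr_natr mulrC mulfK //.
by rewrite pnatr_eq0 -lt0n.
Qed.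

Lemma avg_pair (A B : finType) (F : A * B -> R) :
  avg F = avg (fun a => avg (fun b => F (a, b))).
Proof.
rewrite /avg card_prod natrM invfM -mulrA; congr (_ * _).
rewrite -mulr_sumr; congr (_ * _).
by rewrite pair_bigA; apply: eq_bigr => -[a b] _.
Qed.

Lemma avg_bij (A B : finType) (h : A -> B) (F : B -> R) :
  bijective h -> avg (fun a => F (h a)) = avg F.
Proof.
move=> bh; rewrite /avg (bij_eq_card bh); congr (_ * _).
by rewrite (reindex h) //; apply: onW_bij.
Qed.

Lemma avg_swap (A B : finType) (F : A -> B -> R) :
  avg (fun a => avg (fun b => F a b)) = avg (fun b => avg (fun a => F a b)).
Proof.
rewrite -(avg_pair (fun p : A * B => F p.1 p.2)) -(avg_pair (fun p : B * A => F p.2 p.1)).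
rewrite -(avg_bij (h := fun p : A * B => (p.2, p.1)) (fun p : B * A => F p.2 p.1)) //.
by exists (fun p : B * A => (p.2, p.1)) => -[].
Qed.

Lemma avg_ffun_prod (I T : finType) (phi : I -> T -> R) :
  avg (fun t : {ffun I -> T} => \prod_i phi i (t i)) = \prod_i avg (phi i).
Proof.
rewrite /avg card_ffun natrX -exprVn -prodr_const big_split /=.
by rewrite bigA_distr_bigA.
Qed.

Lemma avg_CS (T : finType) (f g : T -> R) :
  (avg (fun x => f x * g x)) ^+ 2 <= avg (fun x => f x ^+ 2) * avg (fun x => g x ^+ 2).
Proof.
set a := avg (fun x => f x ^+ 2); set b := avg (fun x => g x ^+ 2).
set c := avg (fun x => f x * g x).
have key : forall t, 0 <= t ^+ 2 * a - 2 * t * c + b.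
  move=> t; have := avg_ge0 (fun x => sqr_ge0 (t * f x - g x)).
  rewrite (eq_avg (g := fun x => t^+2 * f x ^+ 2 + (- (2 * t * (f x * g x))) + g x ^+ 2)).
    by rewrite !avgD avgN !avgZ.
  by move=> x; rewrite sqrrB exprMn; ring.
have a0 : 0 <= a by apply: avg_ge0 => x; apply: sqr_ge0.
have [az|ap] := eqVneq a 0.
  have hc : c = 0.
    apply/eqP; apply: contraT => cn.
    have := key ((b + 1) / (2 * c)); rewrite az.
    have -> : ((b + 1) / (2 * c)) ^+ 2 * 0 - 2 * ((b + 1) / (2 * c)) * c + b = -1.
      by field; rewrite cn.
    by rewrite ler0N1.
  by rewrite hc az mul0r expr0n.
have apos : 0 < a by rewrite lt_def ap a0.
have := key (c / a).
have -> : (c / a) ^+ 2 * a - 2 * (c / a) * c + b = b - c ^+ 2 / a by field.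
rewrite subr_ge0 ler_pdivrMr // => h.
by rewrite mulrC.
Qed.

End AvgLemmas.

Section Glue.
Variable J : finType.
Variable V : nat -> J -> finType.
Variable N : nat.
Variable e : {set J}.
Variable j : J.
Hypothesis hj : j \in e.

Definition jj : {k : J | k \in e} := exist _ j hj.

Lemma inD1_e (i : J) : i \in e :\ j -> i \in e.
Proof. by rewrite in_setD1 => /andP[]. Qed.

Definition restrD (x : Ve V N e) : Ve V N (e :\ j) :=
  @finfun _ (fun i : {k : J | k \in e :\ j} => V N (val i))
    (fun i => x (exist _ (val i) (inD1_e (valP i)))).

Lemma sigD (A : {set J}) (x : Ve V N A) k (p1 p2 : k \in A) :
  x (exist _ k p1) = x (exist _ k p2).
Proof. by rewrite (bool_irrelevance p1 p2). Qed.

Lemma glue_jj (y : Ve V N (e :\ j)) (a : V N j) : glue y a jj = a.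
Proof.
rewrite /glue ffunE /=; case: eqP => [h|hn] //.
by rewrite [h]eq_axiomK.
Qed.

Lemma glue_ne (y : Ve V N (e :\ j)) (a : V N j) (k : J) (hk : k \in e) (hn : k <> j) :
  glue y a (exist _ k hk) = y (exist _ k (in_setD1_of hk hn)).
Proof.
rewrite /glue ffunE /=; case: eqP => [h|hn'] //.
by move: (in_setD1_of _ _) (in_setD1_of _ _) => p1 p2; rewrite (bool_irrelevance p1 p2).
Qed.

Lemma glue_restr (x : Ve V N e) : glue (restrD x) (x jj) = x.
Proof.
apply/ffunP => -[k hk].
case: (k =P j) => [kj|kn].
  subst k; rewrite (bool_irrelevance hk hj) glue_jj //.
rewrite glue_ne /restrD ffunE /=; exact: sigD.
Qed.

Lemma restr_glue (y : Ve V N (e :\ j)) (a : V N j) : restrD (glue y a) = y.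
Proof.
apply/ffunP => -[k hk]; rewrite /restrD ffunE /=.
have kn : k <> j by move=> kj; move: hk; rewrite kj in_setD1 eqxx.
rewrite glue_ne; exact: sigD.
Qed.

Lemma glue_bij : bijective (fun p : Ve V N (e :\ j) * V N j => glue p.1 p.2).
Proof.
exists (fun x => (restrD x, x jj)).
  by move=> [y a] /=; rewrite restr_glue glue_jj.
by move=> x /=; rewrite glue_restr.
Qed.

Definition rcube (w : cube e) : cube (e :\ j) :=
  [ffun i : {k : J | k \in e :\ j} => w (exist _ (val i) (inD1_e (valP i)))].

Lemma cubept_glue (y0 y1 : Ve V N (e :\ j)) (a0 a1 : V N j) (w : cube e) :
  cubept (glue y0 a0) (glue y1 a1) w =
  glue (cubept y0 y1 (rcube w)) (if w jj then a1 else a0).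
Proof.
apply/ffunP => -[k hk].
case: (k =P j) => [kj|kn].
  subst k; rewrite (bool_irrelevance hk hj) glue_jj /cubept ffunE /=.
  by case: (w jj); rewrite glue_jj.
rewrite /cubept ffunE /= !glue_ne ffunE /rcube ffunE /=.
by rewrite (bool_irrelevance (inD1_e _) hk).
Qed.

End Glue.

Section Box.
Variable R : realType.
Variable J : finType.
Variable V : nat -> J -> finType.
Variable N : nat.
Variable e : {set J}.

Definition box (F : cube e -> Ve V N e -> R) : R :=
  avg (fun p : Ve V N e * Ve V N e => \prod_(w : cube e) F w (cubept p.1 p.2 w)).

Definition setc (w : cube e) (i : {k : J | k \in e}) (b : bool) : cube e :=
  [ffun i' => if i' == i then b else w i'].

Variable j : J.
Hypothesis hj : j \in e.
Local Notation jj := (jj hj).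

Definition flip (w : cube e) : cube e := setc w jj (~~ w jj).

Lemma setc_same (w : cube e) (b : bool) : w jj = b -> setc w jj b = w.
Proof. by move=> h; apply/ffunP => i; rewrite ffunE; case: eqP => // ->. Qed.

Lemma setc_jj (w : cube e) (b : bool) : setc w jj b jj = b.
Proof. by rewrite ffunE eqxx. Qed.

Lemma setc_setc (w : cube e) (b c : bool) : setc (setc w jj c) jj b = setc w jj b.
Proof. by apply/ffunP => i; rewrite !ffunE; case: eqP. Qed.

Lemma flip_jj (w : cube e) : flip w jj = ~~ w jj.
Proof. exact: setc_jj. Qed.

Lemma flipK : involutive flip.
Proof.
move=> w; rewrite /flip setc_setc setc_jj negbK; exact: setc_same.
Qed.

Lemma rcube_setc (w : cube e) (b : bool) : rcube j (setc w jj b) = rcube j w.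
Proof.
apply/ffunP => -[k hk]; rewrite !ffunE /=; case: eqP => // /(congr1 val) /= kj.
by exfalso; move: (hk); rewrite kj in_setD1 eqxx.
Qed.

Definition Pp (F : cube e -> Ve V N e -> R) (y : Ve V N (e :\ j) * Ve V N (e :\ j)) (a : V N j) :=
  \prod_(w : cube e | ~~ w jj) F w (glue (cubept y.1 y.2 (rcube j w)) a).
Definition Qp (F : cube e -> Ve V N e -> R) (y : Ve V N (e :\ j) * Ve V N (e :\ j)) (a : V N j) :=
  \prod_(w : cube e | w jj) F w (glue (cubept y.1 y.2 (rcube j w)) a).

Lemma avg_glue (Phi : Ve V N e -> R) :
  avg Phi = avg (fun y : Ve V N (e :\ j) => avg (fun a : V N j => Phi (glue y a))).
Proof.
rewrite -(avg_bij (h := fun p : Ve V N (e :\ j) * V N j => glue p.1 p.2) Phi (glue_bij V N hj)).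
by rewrite avg_pair.
Qed.

Lemma box_split F :
  box F = avg (fun y => avg (fun a => Pp F y a) * avg (fun a => Qp F y a)).
Proof.
rewrite /box avg_pair.
under eq_avg => p0 do rewrite avg_glue.
rewrite avg_glue.
under eq_avg => y0 do under eq_avg => a0 do under eq_avg => y1 do under eq_avg => a1 do
  (rewrite (bigID (fun w : cube e => w jj)) /=).
rewrite avg_pair.
apply: eq_avg => y0; rewrite avg_swap; apply: eq_avg => y1 /=.
rewrite -avgZr; apply: eq_avg => a0; rewrite -avgZ; apply: eq_avg => a1.
rewrite mulrC /Pp /Qp; congr (_ * _); apply: eq_bigr => w.
  by move=> /negbTE h; rewrite cubept_glue h.
by move=> h; rewrite cubept_glue h.
Qed.

Lemma Pp_false F y a : Pp (fun w => F (setc w jj false)) y a = Pp F y a.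
Proof. by apply: eq_bigr => w /negbTE h; rewrite setc_same. Qed.

Lemma Qp_false F y a : Qp (fun w => F (setc w jj false)) y a = Pp F y a.
Proof.
rewrite /Qp (reindex_inj (inv_inj flipK)) /=.
apply: eq_big => [w|w h]; first by rewrite flip_jj.
by move: h; rewrite flip_jj => /negbTE h; rewrite /flip setc_setc rcube_setc setc_same.
Qed.

Lemma Pp_true F y a : Pp (fun w => F (setc w jj true)) y a = Qp F y a.
Proof.
rewrite /Pp (reindex_inj (inv_inj flipK)) /=.
apply: eq_big => [w|w h]; first by rewrite flip_jj negbK.
by move: h; rewrite flip_jj negbK => h; rewrite /flip setc_setc rcube_setc setc_same.
Qed.

Lemma Qp_true F y a : Qp (fun w => F (setc w jj true)) y a = Qp F y a.
Proof. by apply: eq_bigr => w h; rewrite setc_same. Qed.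

Lemma box_CS F :
  box F ^+ 2 <= box (fun w => F (setc w jj false)) * box (fun w => F (setc w jj true)).
Proof.
rewrite (box_split F) (box_split (fun w => F (setc w jj false)))
  (box_split (fun w => F (setc w jj true))).
rewrite [X in _ <= X * _](eq_avg (g := fun y => avg (fun a => Pp F y a) ^+ 2)); last first.
  by move=> y; rewrite expr2; congr (_ * _); [apply: eq_avg => a; exact: Pp_false|apply: eq_avg => a; exact: Qp_false].
rewrite [X in _ <= _ * X](eq_avg (g := fun y => avg (fun a => Qp F y a) ^+ 2)); last first.
  by move=> y; rewrite expr2; congr (_ * _); [apply: eq_avg => a; exact: Pp_true|apply: eq_avg => a; exact: Qp_true].
exact: avg_CS.
Qed.

End Box.

Section Iter.
Variable R : realType.
Variable J : finType.
Variable V : nat -> J -> finType.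
Variable N : nat.
Variable e : {set J}.

Lemma jj_val (i : {k : J | k \in e}) : jj (valP i) = i.
Proof. by apply: val_inj. Qed.

Fixpoint Ls (js : seq {k : J | k \in e}) : seq (cube e -> cube e) :=
  match js with
  | [::] => [:: id]
  | i :: js' => flatten [seq [:: (fun w => s (setc w i false)); (fun w => s (setc w i true))]
                          | s <- Ls js']
  end.

Lemma box_iter js (F : cube e -> Ve V N e -> R) :
  `|box F| ^+ (2 ^ size js) <= \prod_(s <- Ls js) `|box (fun w => F (s w))|.
Proof.
elim: js F => [|i js IH] F /=; first by rewrite expn0 expr1 big_seq1.
rewrite expnS mulnC exprM.
apply: (le_trans (y := (\prod_(s <- Ls js) `|box (fun w => F (s w))|) ^+ 2)).
  apply: (lerXn2r 2); last exact: IH.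
    by rewrite nnegrE exprn_ge0 ?normr_ge0.
  by rewrite nnegrE prodr_ge0 // => s _; rewrite normr_ge0.
rewrite -prodrXl big_flatten /= big_map.
apply: ler_prod => s _; rewrite exprn_ge0 ?normr_ge0 //=.
rewrite big_cons big_seq1 real_normK ?num_real //.
have H := @box_CS R J V N e (val i) (valP i) (fun w => F (s w)); rewrite jj_val in H.
apply: (le_trans H); by rewrite -normrM ler_norm.
Qed.

Lemma In_flatten_map (A B : Type) (f : A -> seq B) (l : seq A) (x : B) :
  List.In x (flatten (map f l)) -> exists a, List.In a l /\ List.In x (f a).
Proof.
elim: l => [|a l IH] //= h.
case: (List.in_app_or _ _ _ h) => [h'|/IH [b [h1 h2]]]; first by exists a; split; [left|].
by exists b; split; [right|].
Qed.

Lemma Ls_const js (s : cube e -> cube e) : List.In s (Ls js) ->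
  forall w w' : cube e, (forall i, i \notin js -> w i = w' i) -> s w = s w'.
Proof.
elim: js s => [|i js IH] s /=.
  move=> [<-|//] w w' h; apply/ffunP => k; exact: h.
move=> hin; case: (In_flatten_map hin) => s' [s'in /= hs] w w' h.
have key : forall b, s' (setc w i b) = s' (setc w' i b).
  move=> b; apply: (IH _ s'in) => k kn; rewrite !ffunE; case: eqP => // /eqP kni.
  by apply: h; rewrite inE negb_or kni kn.
by case: hs => [<-|[<-|//]].
Qed.

Lemma Ls_head js : exists s0 rest, Ls js = s0 :: rest /\ s0 (cube0 e) = cube0 e.
Proof.
elim: js => [|i js [s0 [rest [E h]]]] /=; first by exists id, [::].
rewrite E /=; exists (fun w => s0 (setc w i false)); eexists; split; first by [].
rewrite -[RHS]h; congr s0; apply/ffunP => k; rewrite !ffunE; by case: eqP.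
Qed.

Lemma box_const (G : Ve V N e -> R) (F : cube e -> Ve V N e -> R) :
  (forall w, F w = G) -> box F = box (fun _ => G).
Proof. by move=> h; apply: eq_avg => p; apply: eq_bigr => w _; rewrite h. Qed.

Lemma prod_le_pow (T : Type) (l : seq T) (F : T -> R) (C : R) :
  (forall s, List.In s l -> 0 <= F s <= C) -> \prod_(s <- l) F s <= C ^+ size l.
Proof.
move=> h; suff : 0 <= \prod_(s <- l) F s <= C ^+ size l by case/andP.
elim: l h => [|a l IH] h; first by rewrite big_nil ler01 lexx.
rewrite big_cons /= exprS; have /andP[h1 h2] := h a (or_introl erefl).
have /andP[h3 h4] : 0 <= \prod_(s <- l) F s <= C ^+ size l by apply: IH => s hs; apply: h; right.
by rewrite mulr_ge0 //= ler_pM.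
Qed.

Definition Mexp : nat := (size (Ls (enum {: {k : J | k \in e}}))).-1.

Lemma GCS (G : cube e -> Ve V N e -> R) (delta C : R) :
  0 <= delta -> 0 <= C ->
  `|box (fun _ => G (cube0 e))| <= delta ->
  (forall t, `|box (fun _ => G t)| <= C) ->
  `|box G| ^+ (2 ^ #|{: {k : J | k \in e}}|) <= delta * C ^+ Mexp.
Proof.
move=> d0 C0 hd hC.
have := box_iter (enum {: {k : J | k \in e}}) G; rewrite -cardE => /le_trans; apply.
rewrite /Mexp; have [s0 [rest [E h0]]] := Ls_head (enum {: {k : J | k \in e}}).
have cst : forall s, List.In s (Ls (enum {: {k : J | k \in e}})) -> forall w, s w = s (cube0 e).
  move=> s sin w; apply: (Ls_const sin) => i; by rewrite mem_enum.
rewrite E big_cons /=.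
apply: ler_pM; rewrite ?normr_ge0 //.
- by apply: prodr_ge0 => s _; rewrite normr_ge0.
- rewrite (box_const (G := G (cube0 e))) // => w; rewrite (cst s0) ?E; [by rewrite h0|by left].
- apply: prod_le_pow => s hs; rewrite normr_ge0 /=.
  rewrite (box_const (G := G (s (cube0 e)))) // => w; rewrite (cst s) ?E //; by right.
Qed.

End Iter.

Section Misc.
Variable R : realType.

Lemma big_option (K : finType) (F : option K -> R) :
  \prod_(k : option K) F k = F None * \prod_(k : K) F (Some k).
Proof.
rewrite (bigD1 None) //=; congr (_ * _).
rewrite (reindex_omap Some (fun o => o)) /=; last by move=> [k|].
by apply: eq_bigl => k; rewrite eqxx.
Qed.

Definition swp (T : eqType) (a b k : T) := if k == a then b else if k == b then a else k.

Lemma swpK (T : eqType) (a b : T) : involutive (swp a b).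
Proof.
move=> k; rewrite /swp.
case: (eqVneq k a) => [->|ka]; first by rewrite eqxx; case: eqVneq.
case: (eqVneq k b) => [->|kb]; first by rewrite eqxx.
by rewrite (negbTE ka) (negbTE kb).
Qed.

Lemma swpL (T : eqType) (a b : T) : swp a b a = b.
Proof. by rewrite /swp eqxx. Qed.

End Misc.

Section Opt.
Variable R : realType.
Variable J : finType.
Variable V : nat -> J -> finType.
Variable N : nat.
Variable K : finType.
Hypothesis Vne : forall j, (0 < #|V N j|)%N.

Definition V' : nat -> J -> finType := fun _ j => {ffun option K -> V N j}.

Lemma Ve_ne (e : {set J}) : (0 < #|Ve V N e|)%N.
Proof.
apply/card_gt0P.
exists (@finfun _ (fun i : {k : J | k \in e} => V N (val i))
          (fun i => @enum_val (V N (val i)) predT (Ordinal (Vne (val i))))).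
by [].
Qed.

Variable e : {set J}.
Local Notation X := (Ve V N e).
Local Notation U := (Ve V' N e).

Definition sel (c : {k : J | k \in e} -> option K) (u : U) : X :=
  @finfun _ (fun i : {k : J | k \in e} => V N (val i)) (fun i => (u i : {ffun option K -> V N (val i)}) (c i)).

Definition swapU (u : U) : {ffun option K -> X} := [ffun k => sel (fun _ => k) u].
Definition iswapU (t : {ffun option K -> X}) : U :=
  @finfun _ (fun i : {k : J | k \in e} => V' N (val i)) (fun i => [ffun k => t k i]).

Lemma swapU_bij : bijective swapU.
Proof.
exists iswapU.
  move=> u; apply/ffunP => i; apply/ffunP => k; by rewrite !ffunE.
move=> t; apply/ffunP => k; apply/ffunP => i; by rewrite !ffunE.
Qed.

Lemma PF (Phi : option K -> X -> R) :
  avg (fun u : U => \prod_k Phi k (sel (fun _ => k) u)) = \prod_k avg (Phi k).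
Proof.
rewrite -avg_ffun_prod -(avg_bij (h := swapU) (fun t : {ffun option K -> X} => \prod_k Phi k (t k)) swapU_bij).
by apply: eq_avg => u; apply: eq_bigr => k _; rewrite ffunE.
Qed.

Definition permU (c : {k : J | k \in e} -> option K) (u : U) : U :=
  @finfun _ (fun i : {k : J | k \in e} => V' N (val i))
    (fun i => [ffun k => (u i : {ffun option K -> V N (val i)}) (swp None (c i) k)]).

Lemma permUK c : involutive (permU c).
Proof. by move=> u; apply/ffunP => i; apply/ffunP => k; rewrite !ffunE swpK. Qed.

Lemma PFsel c (Phi : X -> R) : avg (fun u : U => Phi (sel c u)) = avg Phi.
Proof.
have -> : avg (fun u : U => Phi (sel c u)) = avg (fun u : U => Phi (sel (fun _ => None) (permU c u))).
  by apply: eq_avg => u; congr Phi; apply/ffunP => i; rewrite !ffunE swpL.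
rewrite (avg_bij (h := permU c) (fun u => Phi (sel (fun _ => None) u))); last exact: inv_bij (permUK c).
have := PF (fun k => if k is None then Phi else fun _ => 1).
rewrite big_option /= big1 ?mulr1; last by move=> k _; rewrite avg_cst // Ve_ne.
move=> <-; apply: eq_avg => u; by rewrite big_option big1 ?mulr1.
Qed.

Lemma sel_cubept c (u0 u1 : U) w :
  sel c (cubept u0 u1 w) = cubept (sel c u0) (sel c u1) w.
Proof. by apply/ffunP => i; rewrite !ffunE; case: (w i). Qed.

End Opt.

Lemma cubept0 (J : finType) (V : nat -> J -> finType) N (e : {set J}) (x0 x1 : Ve V N e) :
  cubept x0 x1 (cube0 e) = x0.
Proof. by apply/ffunP => i; rewrite !ffunE. Qed.

Section Misc2.
Variable R : realType.

Lemma avg2_ffun_prod (K T : finType) (psi : K -> T -> T -> R) : (0 < #|T|)%N ->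
  avg (fun a1 : {ffun option K -> T} => avg (fun a2 : {ffun option K -> T} =>
     \prod_k psi k (a1 (Some k)) (a2 (Some k))))
  = \prod_k avg (fun b1 => avg (fun b2 => psi k b1 b2)).
Proof.
move=> T0.
have E1 : forall a1 : {ffun option K -> T}, avg (fun a2 : {ffun option K -> T} =>
     \prod_k psi k (a1 (Some k)) (a2 (Some k))) = \prod_k avg (fun b2 => psi k (a1 (Some k)) b2).
  move=> a1; have := avg_ffun_prod (fun k' => if k' is Some k then psi k (a1 (Some k)) else fun _ => 1).
  rewrite big_option /= avg_cst // mul1r => <-.
  by apply: eq_avg => a2; rewrite big_option mul1r.
rewrite (eq_avg E1).
have := avg_ffun_prod (fun k' => if k' is Some k then (fun b1 => avg (fun b2 => psi k b1 b2)) else fun _ => 1).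
rewrite big_option /= avg_cst // mul1r => <-.
by apply: eq_avg => a1; rewrite big_option mul1r.
Qed.

Lemma prod_le_1sum (I : finType) (F : I -> R) : (forall i, 0 <= F i) ->
  \prod_i F i <= 1 + \sum_i F i ^+ #|I|.
Proof.
move=> F0; case: (pickP (@predT I)) => [i0 _|none]; last first.
  rewrite big_pred0 // big_pred0 // addr0 //.
have [i1 _ Hmax] := @arg_maxP _ _ I i0 predT F erefl.
apply: (le_trans (y := F i1 ^+ #|I|)).
  rewrite -prodr_const; apply: ler_prod => i _; rewrite F0 /=; exact: Hmax.
rewrite (bigD1 i1) //= addrCA lerDl addr_ge0 ?ler01 ?sumr_ge0 // => i _.
by rewrite exprn_ge0.
Qed.

End Misc2.

Section Claims.
Variable R : realType.
Variable J : finType.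
Variable V : nat -> J -> finType.
Variable N : nat.
Variable K : finType.
Hypothesis Vne : forall j, (0 < #|V N j|)%N.
Variable e : {set J}.
Local Notation X := (Ve V N e).
Local Notation U := (Ve (V' V N K) N e).
Variable g : X -> R.
Variable f : K -> X -> R.

Definition Gf (w : cube e) (u : U) : R :=
  if w == cube0 e then g (sel (fun _ => None) u)
  else \prod_(k : K) f k (sel (fun i => if w i then Some k else None) u).

Lemma claim1 : box Gf = avg (fun x => g x * \prod_k dual (f k) x).
Proof.
rewrite /box avg_pair.
rewrite -(PFsel (K := K) Vne (fun _ => None) (fun x => g x * \prod_k dual (f k) x)).
apply: eq_avg => p1.
set x0 := sel _ p1.
have D : \prod_k dual (f k) x0 = avg (fun p2 : U =>
    \prod_k \prod_(w | w != cube0 e) f k (cubept x0 (sel (fun _ => Some k) p2) w)).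
  have := @PF R J V N K e (fun k' => if k' is Some k then (fun y => \prod_(w | w != cube0 e) f k (cubept x0 y w)) else fun _ => 1).
  rewrite big_option /= avg_cst ?Ve_ne // mul1r => <-.
  by apply: eq_avg => u; rewrite big_option mul1r.
rewrite D -avgZ; apply: eq_avg => p2 /=.
rewrite (bigD1 (cube0 e)) //= /Gf eqxx cubept0; congr (_ * _).
rewrite [RHS]exchange_big /=; apply: eq_bigr => w /negbTE ->; apply: eq_bigr => k _.
congr (f k); apply/ffunP => i; rewrite !ffunE; by case: (w i).
Qed.

Lemma claim2 : box (fun _ => Gf (cube0 e)) = avg (fun p : X * X => \prod_w g (cubept p.1 p.2 w)).
Proof.
rewrite /box /Gf eqxx !avg_pair.
rewrite -(PFsel (K := K) Vne (fun _ => None) (fun x1 => avg (fun x2 => \prod_w g (cubept x1 x2 w)))).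
apply: eq_avg => p1 /=.
rewrite -(PFsel (K := K) Vne (fun _ => None) (fun x2 => \prod_w g (cubept (sel (fun _ => None) p1) x2 w))).
apply: eq_avg => p2 /=; apply: eq_bigr => w _; by rewrite sel_cubept.
Qed.

Lemma sel_glue (j : J) (hj : j \in e) (c : {k : J | k \in e} -> option K)
  (y : Ve (V' V N K) N (e :\ j)) (a : {ffun option K -> V N j}) :
  sel c (glue y a : U) = glue (sel (fun i => c (exist _ (val i) (inD1_e (valP i)))) y) (a (c (jj hj))).
Proof.
apply/ffunP => -[k hk].
case: (k =P j) => [kj|kn].
  subst k; rewrite (bool_irrelevance hk hj) glue_jj /sel ffunE.
  by rewrite (glue_jj (V := V' V N K)).
rewrite /sel ffunE !glue_ne ffunE /=.
by rewrite (bool_irrelevance (inD1_e _) hk).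
Qed.

Lemma Vne' : forall j, (0 < #|V' V N K N j|)%N.
Proof. by move=> j; rewrite /V' card_ffun expn_gt0 Vne. Qed.

Lemma claim3 (t : cube e) (j : J) (hj : j \in e) (tj : t (jj hj)) (hh : X -> R)
  (hh0 : forall x, 0 <= hh x) (hf : forall k x, `|f k x| <= hh x) :
  `|box (fun _ => Gf t)| <= 1 + #|K|%:R * avg (fun z : Ve V N (e :\ j) * Ve V N (e :\ j) =>
       (avg (fun b : V N j * V N j => \prod_w hh (cubept (glue z.1 b.1) (glue z.2 b.2) w))) ^+ #|K|).
Proof.
set c := fun (k : K) (i : {k : J | k \in e}) => if t i then Some k else None.
set Th := fun x1 x2 : X => \prod_w hh (cubept x1 x2 w).
have Th0 : forall x1 x2, 0 <= Th x1 x2 by move=> x1 x2; apply: prodr_ge0 => w _.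
set Phi := fun z : Ve V N (e :\ j) * Ve V N (e :\ j) =>
  avg (fun b : V N j * V N j => Th (glue z.1 b.1) (glue z.2 b.2)).
have Phi0 : forall z, 0 <= Phi z by move=> z; apply: avg_ge0 => b.
have tn : t != cube0 e by apply: contraTneq tj => ->; rewrite ffunE.
have Sa : `|box (fun _ => Gf t)| <= avg (fun p : U * U => \prod_k Th (sel (c k) p.1) (sel (c k) p.2)).
  apply: le_trans (norm_avg _) _; apply: avg_le => p.
  rewrite normr_prod /Gf (negbTE tn) /Th [X in _ <= X]exchange_big /=.
  apply: ler_prod => w _; rewrite normr_ge0 normr_prod /=; apply: ler_prod => k _.
  by rewrite normr_ge0 /= sel_cubept.
apply: (le_trans Sa).
set c' := fun (k : K) (i : {k : J | k \in e :\ j}) => c k (exist _ (val i) (inD1_e (valP i))).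
have Sb : avg (fun p : U * U => \prod_k Th (sel (c k) p.1) (sel (c k) p.2)) =
  avg (fun y1 : Ve (V' V N K) N (e :\ j) => avg (fun y2 : Ve (V' V N K) N (e :\ j) =>
     \prod_k Phi (sel (c' k) y1, sel (c' k) y2))).
  rewrite avg_pair [LHS](@avg_glue R J (V' V N K) N e j hj).
  apply: eq_avg => y1; rewrite avg_swap.
  rewrite [LHS](@avg_glue R J (V' V N K) N e j hj).
  apply: eq_avg => y2; rewrite avg_swap.
  rewrite (eq_avg (g := fun a1 : {ffun option K -> V N j} => avg (fun a2 : {ffun option K -> V N j} =>
      \prod_k Th (glue (sel (c' k) y1) (a1 (Some k))) (glue (sel (c' k) y2) (a2 (Some k)))))).
    rewrite (avg2_ffun_prod (fun k b1 b2 => Th (glue (sel (c' k) y1) b1) (glue (sel (c' k) y2) b2)) (Vne j)).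
    by apply: eq_bigr => k _; rewrite /Phi avg_pair.
  move=> a1; apply: eq_avg => a2; apply: eq_bigr => k _.
  by rewrite !sel_glue /c tj.
rewrite Sb.
set m := #|K|.
apply: (le_trans (y := avg (fun y1 : Ve (V' V N K) N (e :\ j) => avg (fun y2 : Ve (V' V N K) N (e :\ j) =>
     1 + \sum_k Phi (sel (c' k) y1, sel (c' k) y2) ^+ m)))).
  by apply: avg_le => y1; apply: avg_le => y2; apply: prod_le_1sum => k; exact: Phi0.
have ne' := Ve_ne Vne' (e :\ j).
rewrite (eq_avg (g := fun y1 : Ve (V' V N K) N (e :\ j) => 1 + \sum_k avg (fun y2 : Ve (V' V N K) N (e :\ j) =>
     Phi (sel (c' k) y1, sel (c' k) y2) ^+ m))); last first.
  by move=> y1; rewrite avgD avg_cst // avg_sum.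
rewrite avgD avg_cst // avg_sum.
rewrite (eq_bigr (fun _ => avg (fun z : Ve V N (e :\ j) * Ve V N (e :\ j) => Phi z ^+ m))); last first.
  move=> k _; rewrite avg_pair.
  rewrite -(PFsel Vne (c' k) (fun z1 => avg (fun z2 => Phi (z1, z2) ^+ m))).
  apply: eq_avg => y1.
  by rewrite -(PFsel Vne (c' k) (fun z2 => Phi (sel (c' k) y1, z2) ^+ m)).
by rewrite sumr_const /= mulr_natl.
Qed.

End Claims.

Section Restr.
Variable R : realType.
Variable J : finType.
Variable V : nat -> J -> finType.
Variable N : nat.
Hypothesis Vne : forall j, (0 < #|V N j|)%N.
Variable e : {set J}.

Definition pickv (y : Ve V N e) (x : VJ V N) (j : J) : V N j :=
  (if j \in e as b return (j \in e = b -> V N j) then fun h => y (exist _ j h) else fun _ => x j)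
  (erefl (j \in e)).

Lemma pickv_in y x j (h : j \in e) : pickv y x j = y (exist _ j h).
Proof.
rewrite /pickv; move: (erefl (j \in e)).
case: {2 3}(j \in e) => h'; first by rewrite (bool_irrelevance h' h).
by exfalso; move: (h); rewrite h'.
Qed.

Lemma pickv_out y x j : j \notin e -> pickv y x j = x j.
Proof.
move=> h; rewrite /pickv; move: (erefl (j \in e)).
case: {2 3}(j \in e) => h' //.
by exfalso; move: (h); rewrite h'.
Qed.

Definition upd (y : Ve V N e) (x : VJ V N) : VJ V N :=
  @finfun J (fun j => V N j) (pickv y x).

Lemma restr_upd y x : restr e (upd y x) = y.
Proof. by apply/ffunP => -[j h]; rewrite !ffunE /= pickv_in. Qed.

Lemma upd_restr x : upd (restr e x) x = x.
Proof.
apply/ffunP => j; rewrite ffunE; case: (boolP (j \in e)) => h.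
  by rewrite pickv_in ffunE.
by rewrite pickv_out.
Qed.

Lemma upd_upd y y' x : upd y (upd y' x) = upd y x.
Proof.
apply/ffunP => j; rewrite !ffunE; case: (boolP (j \in e)) => h.
  by rewrite !pickv_in.
by rewrite !pickv_out // ffunE pickv_out.
Qed.

Definition fib (y : Ve V N e) := [set x : VJ V N | restr e x == y].

Lemma fib_le y y' : (#|fib y| <= #|fib y'|)%N.
Proof.
rewrite -(@card_in_imset _ _ (upd y')); last first.
  move=> x1 x2; rewrite !inE => /eqP h1 /eqP h2 E.
  by rewrite -(upd_restr x1) -(upd_restr x2) h1 h2 -(upd_upd y y' x1) E upd_upd.
apply: subset_leq_card; apply/subsetP => x /imsetP [x' _ ->].
by rewrite inE restr_upd.
Qed.

Lemma VJ_ne : (0 < #|VJ V N|)%N.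
Proof.
apply/card_gt0P.
by exists (@finfun J (fun j => V N j) (fun j => @enum_val (V N j) predT (Ordinal (Vne j)))).
Qed.

Lemma avg_restr (Phi : Ve V N e -> R) :
  avg (fun x : VJ V N => Phi (restr e x)) = avg Phi.
Proof.
have [y0 _] : exists y0 : Ve V N e, true.
  by exists (restr e (@finfun J (fun j => V N j) (fun j => @enum_val (V N j) predT (Ordinal (Vne j))))).
set c := #|fib y0|.
have fibc : forall y, #|fib y| = c by move=> y; apply/eqP; rewrite eqn_leq !fib_le.
have cardVJ : #|VJ V N| = (#|Ve V N e| * c)%N.
  rewrite -sum1_card (partition_big (restr e) predT) //=.
  have -> : (#|Ve V N e| * c)%N = \sum_(y : Ve V N e) c by rewrite sum_nat_const.
  apply: eq_bigr => y _.
  by rewrite sum1_card -(fibc y) /fib cardsE.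
have c0 : (0 < c)%N by move: VJ_ne; rewrite cardVJ muln_gt0 => /andP[].
rewrite /avg cardVJ natrM (partition_big (restr e) predT) //=.
rewrite invfM -mulrA; congr (_ * _).
rewrite mulr_sumr; apply: eq_bigr => y _.
rewrite (eq_bigr (fun _ => Phi y)); last by move=> x /= /eqP ->.
rewrite sumr_const.
have -> : #|[pred x : VJ V N | true && (restr e x == y)]| = c.
  by rewrite -(fibc y) /fib cardsE.
have cn : (c%:R : R) != 0 by rewrite pnatr_eq0 -lt0n.
by rewrite -[Phi y *+ c]mulr_natr; field.
Qed.

End Restr.

Section Fin.
Variable R : realType.

Lemma fin_eventually (T : finType) (P : T -> nat -> Prop) :
  (forall t, exists N0, forall N, (N0 <= N)%N -> P t N) ->
  exists N0, forall t N, (N0 <= N)%N -> P t N.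
Proof.
move=> h.
suff : forall s : seq T, exists N0, forall t, t \in s -> forall N, (N0 <= N)%N -> P t N.
  by case/(_ (enum T)) => N0 H; exists N0 => t N hN; apply: H => //; rewrite mem_enum.
elim => [|a s [N1 H1]]; first by exists 0%N.
have [N2 H2] := h a.
exists (maxn N1 N2) => t; rewrite inE => /orP[/eqP ->|ts] N hN.
  by apply: H2; apply: leq_trans hN; apply: leq_maxr.
by apply: H1 => //; apply: leq_trans hN; apply: leq_maxl.
Qed.

Lemma fin_bound (T : finType) (X : T -> nat -> R) :
  (forall t, exists C : R, exists N0, forall N, (N0 <= N)%N -> X t N <= C) ->
  exists C : R, exists N0, forall t N, (N0 <= N)%N -> X t N <= C.
Proof.
move=> h.
suff : forall s : seq T, exists C : R, exists N0, forall t, t \in s -> forall N, (N0 <= N)%N -> X t N <= C.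
  by case/(_ (enum T)) => C [N0 H]; exists C, N0 => t N hN; apply: H => //; rewrite mem_enum.
elim => [|a s [C1 [N1 H1]]]; first by exists 0, 0%N.
have [C2 [N2 H2]] := h a.
exists (Num.max C1 C2), (maxn N1 N2) => t; rewrite inE => /orP[/eqP ->|ts] N hN.
  rewrite le_max; apply/orP; right; apply: H2; apply: leq_trans hN; apply: leq_maxr.
rewrite le_max; apply/orP; left; apply: H1 => //; apply: leq_trans hN; apply: leq_maxl.
Qed.

Lemma sum_pow_le (I : finType) (i0 : I) (a : I -> R) (m : nat) : (forall i, 0 <= a i) ->
  (\sum_i a i) ^+ m <= (#|I|%:R) ^+ m * \sum_i a i ^+ m.
Proof.
move=> a0.
have [i1 _ Hmax] := @arg_maxP _ _ I i0 predT a erefl.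
have s0 : 0 <= \sum_i a i by apply: sumr_ge0.
apply: (le_trans (y := (#|I|%:R * a i1) ^+ m)).
  apply: lerXn2r; rewrite ?nnegrE ?mulr_ge0 ?ler0n //.
  rewrite mulr_natl -sumr_const; apply: ler_sum => i _; exact: Hmax.
rewrite exprMn; apply: ler_wpM2l; first by rewrite exprn_ge0 ?ler0n.
rewrite (bigD1 i1) //= lerDl; apply: sumr_ge0 => i _; exact: exprn_ge0.
Qed.

Lemma expand_m1 (T : finType) (a : T -> R) :
  \prod_t (a t - 1) = \sum_(n : {ffun T -> bool}) \prod_t (if n t then a t else -1).
Proof.
rewrite -(bigA_distr_bigA (fun t (b : bool) => if b then a t else -1)) /=.
by apply: eq_bigr => t _; rewrite big_bool.
Qed.

Lemma expand_p1 (T : finType) (a : T -> R) :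
  \prod_t (a t + 1) = \sum_(n : {ffun T -> bool}) \prod_t a t ^+ n t.
Proof.
rewrite -(bigA_distr_bigA (fun t (b : bool) => a t ^+ b)) /=.
by apply: eq_bigr => t _; rewrite big_bool /= expr1 expr0.
Qed.

Lemma split_sign (T : finType) (a : T -> R) (n : {ffun T -> bool}) :
  \prod_t (if n t then a t else -1) = \prod_t (if n t then 1 else -1) * \prod_t a t ^+ n t.
Proof.
rewrite -big_split /=; apply: eq_bigr => t _; case: (n t); by rewrite ?expr1 ?expr0 ?mul1r ?mulr1.
Qed.

Lemma sum_signs (T : finType) (t0 : T) :
  \sum_(n : {ffun T -> bool}) \prod_t (if n t then 1 else -1) = 0 :> R.
Proof.
rewrite -(bigA_distr_bigA (fun t (b : bool) => if b then 1 else -1 : R)) /= (bigD1 t0) //=.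
by rewrite big_bool /= subrr mul0r.
Qed.

End Fin.

Section Agg.
Variable R : realType.
Variable J : finType.
Variable V : nat -> J -> finType.
Variable H : {set {set J}}.
Unset Implicit Arguments.
Variable nu : forall N (e : {set J}), Ve V N e -> R.
Set Implicit Arguments.
Hypothesis Vne : forall N j, (0 < #|V N j|)%N.
Variable e : {set J}.
Hypothesis eH : e \in H.
Hypothesis nu0 : forall (N : nat) (x : Ve V N e), 0 <= nu N e x.

Definition conv (e' : {set J}) (w : cube e') : cube e :=
  [ffun i : {k : J | k \in e} =>
     if (insub (val i) : option {k : J | k \in e'}) is Some i' then w i' else false].

Lemma conv_id (w : cube e) : conv w = w.
Proof. by apply/ffunP => i; rewrite ffunE valK. Qed.

Lemma ii_to_Ve (n0 : {ffun cube e -> bool}) N :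
  avg (fun p : VJ V N * VJ V N =>
    \prod_(e' in H) \prod_(w : cube e')
      nu N e' (cubept (restr e' p.1) (restr e' p.2) w) ^+ ((e' == e) && n0 (conv w)))
  = avg (fun p : Ve V N e * Ve V N e => \prod_w nu N e (cubept p.1 p.2 w) ^+ n0 w).
Proof.
rewrite (eq_avg (g := fun p : VJ V N * VJ V N =>
   \prod_w nu N e (cubept (restr e p.1) (restr e p.2) w) ^+ n0 w)); last first.
  move=> p; rewrite (bigD1 e) //= [X in _ * X]big1 ?mulr1.
    by apply: eq_bigr => w _; rewrite eqxx conv_id.
  move=> e' /andP[_ /negbTE ->]; apply: big1 => w _; exact: expr0.
rewrite !avg_pair.
rewrite -(avg_restr (Vne N) (fun y1 => avg (fun y2 : Ve V N e => \prod_w nu N e (cubept y1 y2 w) ^+ n0 w))).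
apply: eq_avg => x1.
by rewrite -(avg_restr (Vne N) (fun y2 => \prod_w nu N e (cubept (restr e x1) y2 w) ^+ n0 w)).
Qed.

Lemma ii_agg : pseudorandom H nu -> forall delta : R, 0 < delta ->
  exists N0, forall N, (N0 <= N)%N ->
  `|avg (fun p : Ve V N e * Ve V N e => \prod_w (nu N e (cubept p.1 p.2 w) - 1))| <= delta.
Proof.
move=> [_ [pii _]] delta d0.
set cn := (#|{ffun cube e -> bool}|%:R : R).
have cn0 : 0 < cn by rewrite ltr0n; apply/card_gt0P; exists [ffun => false].
have [N0 HN0] : exists N0, forall (n0 : {ffun cube e -> bool}) N, (N0 <= N)%N ->
    `|avg (fun p : Ve V N e * Ve V N e => \prod_w nu N e (cubept p.1 p.2 w) ^+ n0 w) - 1| <= delta / cn.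
  apply: fin_eventually => n0.
  have [N0 HN] := pii (fun e' w => (e' == e) && n0 (conv w)) (delta / cn) (divr_gt0 d0 cn0).
  by exists N0 => N hN; rewrite -ii_to_Ve; apply: HN.
exists N0 => N hN.
rewrite (eq_avg (g := fun p : Ve V N e * Ve V N e => \sum_(n : {ffun cube e -> bool})
   (\prod_w (if n w then 1 else -1)) * \prod_w nu N e (cubept p.1 p.2 w) ^+ n w)); last first.
  by move=> p; rewrite expand_m1; apply: eq_bigr => n _; rewrite split_sign.
rewrite avg_sum.
under eq_bigr => n _ do rewrite avgZ.
have -> : \sum_(n : {ffun cube e -> bool}) (\prod_w (if n w then 1 else -1)) *
    avg (fun p : Ve V N e * Ve V N e => \prod_w nu N e (cubept p.1 p.2 w) ^+ n w) =
  \sum_(n : {ffun cube e -> bool}) (\prod_w (if n w then 1 else -1)) *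
    (avg (fun p : Ve V N e * Ve V N e => \prod_w nu N e (cubept p.1 p.2 w) ^+ n w) - 1).
  under [RHS]eq_bigr => n _ do rewrite mulrBr mulr1.
  by rewrite sumrB (sum_signs R (cube0 e)) subr0.
apply: le_trans (ler_norm_sum _ _ _) _.
apply: (le_trans (y := \sum_(n : {ffun cube e -> bool}) delta / cn)).
  apply: ler_sum => n _; rewrite normrM normr_prod.
  rewrite (eq_bigr (fun _ => 1)) ?big1_eq ?mul1r; first exact: HN0.
  by move=> w _; case: (n w); rewrite ?normrN normr1.
rewrite sumr_const -mulr_natr mulrAC -mulrA mulfV ?mulr1 //; exact: lt0r_neq0.
Qed.

Lemma iii_agg : pseudorandom H nu -> forall m : nat, exists C : R, exists N0, forall N, (N0 <= N)%N ->
  forall j, j \in e ->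
  avg (fun z : Ve V N (e :\ j) * Ve V N (e :\ j) =>
    (avg (fun b : V N j * V N j =>
       \prod_w (nu N e (cubept (glue z.1 b.1) (glue z.2 b.2) w) + 1))) ^+ m) <= C.
Proof.
move=> [_ [_ piii]] m.
pose X := (fun (t : J * {ffun cube e -> bool}) N => if t.1 \in e then `|avg (fun y : Ve V N (e :\ t.1) * Ve V N (e :\ t.1) =>
     (avg (fun a : V N t.1 * V N t.1 =>
        \prod_w nu N e (cubept (glue y.1 a.1) (glue y.2 a.2) w) ^+ t.2 w)) ^+ m)| else 0).
have HB : forall t, exists C : R, exists N0, forall N, (N0 <= N)%N -> X t N <= C.
  move=> [j n]; rewrite /X /=; case: (boolP (j \in e)) => hj; last by exists 0, 0%N => N _.
  have [C [N0 HN]] := piii e eH j hj n m.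
  by exists C, N0.
have [C [N0 HC]] := fin_bound HB.
pose T : finType := {ffun cube e -> bool}.
exists (#|T|%:R ^+ m * (#|T|%:R * C)), N0 => N hN j hj.
rewrite (eq_avg (g := fun z : Ve V N (e :\ j) * Ve V N (e :\ j) =>
   (\sum_(n : T) avg (fun b : V N j * V N j =>
       \prod_w nu N e (cubept (glue z.1 b.1) (glue z.2 b.2) w) ^+ n w)) ^+ m)); last first.
  by move=> z; congr (_ ^+ m); rewrite -avg_sum; apply: eq_avg => b; rewrite expand_p1.
apply: (le_trans (avg_le (g := fun z : Ve V N (e :\ j) * Ve V N (e :\ j) =>
   #|T|%:R ^+ m * \sum_(n : T) (avg (fun b : V N j * V N j =>
       \prod_w nu N e (cubept (glue z.1 b.1) (glue z.2 b.2) w) ^+ n w)) ^+ m) _)).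
  move=> z; apply: (sum_pow_le ([ffun => false] : T)) => n.
  by apply: avg_ge0 => b; apply: prodr_ge0 => w _; apply: exprn_ge0.
rewrite avgZ avg_sum; apply: ler_wpM2l; first by rewrite exprn_ge0 ?ler0n.
rewrite mulr_natl -sumr_const; apply: ler_sum => n _.
have := HC (j, n) N hN; rewrite /X /= hj; apply: le_trans; exact: ler_norm.
Qed.

End Agg.

Unset Implicit Arguments. Set Strict Implicit.

Theorem mainTheorem11 (R : realType) (J : finType) (V : nat -> J -> finType)
  (d : nat) (H : {set {set J}}) (nu : forall N (e : {set J}), Ve V N e -> R) :
  hypergraph_system V d H ->
  measure_system H nu ->
  pseudorandom H nu ->
  forall e : {set J}, e \in H ->
  forall m : nat, forall eps : R, 0 < eps ->
  exists N0 : nat, forall N : nat, (N0 <= N)%N ->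
  forall (K : finType), #|K| = m ->
  forall f : K -> Ve V N e -> R,
    (forall k x, `|f k x| <= nu N e x + 1) ->
    `|avg (fun x : Ve V N e => (nu N e x - 1) * \prod_(k : K) dual (f k) x)| <= eps.
Proof.
move=> hs ms pr e eH m eps eps0.
have Vne : forall N j, (0 < #|V N j|)%N by case: hs => _ [h _].
have nu0 : forall N (x : Ve V N e), 0 <= nu N e x by move=> N x; case: ms => h _; exact: h.
pose p := (2 ^ #|{: {k : J | k \in e}}|)%N.
pose M := Mexp e.
have [C3 [N3 HC3]] := iii_agg eH nu0 pr m.
pose Cb : R := 1 + m%:R * `|C3|.
have Cb1 : 1 <= Cb by rewrite lerDl mulr_ge0 ?ler0n ?normr_ge0.
have Cb0 : 0 < Cb by apply: lt_le_trans Cb1; exact: ltr01.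
pose delta : R := Num.min 1 (eps ^+ p / Cb ^+ M).
have d0 : 0 < delta by rewrite lt_min ltr01 divr_gt0 // exprn_gt0.
have [N2 HN2] := ii_agg Vne eH pr d0.
exists (maxn N2 N3) => N hN K hK f hf.
have hN2 : (N2 <= N)%N by apply: leq_trans hN; apply: leq_maxl.
have hN3 : (N3 <= N)%N by apply: leq_trans hN; apply: leq_maxr.
rewrite -(claim1 (K := K) (Vne N) (fun x => nu N e x - 1) f).
have p0 : (0 < p)%N by rewrite expn_gt0.
rewrite -(ler_pXn2r p0) ?nnegrE ?normr_ge0 ?(ltW eps0) //.
apply: le_trans (GCS (G := Gf (fun x => nu N e x - 1) f) (delta := delta) (C := Cb) _ _ _ _) _.
- exact: ltW.
- exact: ltW.
- by rewrite claim2 //; apply: HN2.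
- move=> t; case: (eqVneq t (cube0 e)) => [->|tn].
    rewrite claim2 //; apply: le_trans (HN2 N hN2) _.
    by apply: le_trans Cb1; rewrite ge_min lexx.
  have /existsP [i ti] : [exists i, t i].
    apply: contraR tn => /existsPn h; apply/eqP/ffunP => i; rewrite ffunE; exact/negbTE/h.
  have tj : t (jj (valP i)) by rewrite jj_val.
  apply: le_trans (claim3 (Vne N) (fun x => nu N e x - 1) tj (hh := fun x => nu N e x + 1) (fun x => addr_ge0 (nu0 N x) ler01) hf) _.
  rewrite /Cb hK lerD2l; apply: ler_wpM2l; first exact: ler0n.
  apply: le_trans (HC3 N hN3 (val i) (valP i)) _; exact: ler_norm.
- by rewrite -ler_pdivlMr ?exprn_gt0 // ge_min lexx orbT.
Qed.
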